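(* Let $d\in\mathbb{N}$ and let $A$ be a $d\times d$ reclusive matrix. Then the partition graph of the reclusive partition $\mathcal{P}_{A}$ can be properly $(d+1)$-colored; i.e., there is a map $c:\mathcal{P}_A\to\{0,1,\dots,d\}$ such that $c(X)\ne c(Y)$ whenever $X\neq Y$ are adjacent members of $\mathcal{P}_A$.
   Context: A $d\times d$ matrix $A=(a_{ij})$ is reclusive if $a_{ij}=0$ for $i>j$, $a_{ii}=1$ for all $i$, and $a_{ij}>a_{ik}>0$ for all $i\le j<k$. Its reclusive partition is $\mathcal{P}_A=\{A\vec{v}+[0,1)^d:\vec{v}\in\mathbb{Z}^d\}$, a partition of $\mathbb{R}^d$. Two members $X,Y$ are adjacent if $\overline{X}\cap\overline{Y}\neq\emptyset$ (closures). The partition graph has vertex set $\mathcal{P}_A$ and an edge between adjacent members. *)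

(* Defs.v *)
(* Points of R^d are column vectors 'cV[R]_d
   with the product (matrix) topology of MathComp-Analysis. *)
From mathcomp Require Import all_boot all_order all_algebra.
From mathcomp Require Import all_classical all_reals all_analysis.
Set Implicit Arguments. Unset Strict Implicit. Unset Printing Implicit Defensive.
Import Order.TTheory GRing.Theory Num.Theory numFieldNormedType.Exports.
Local Open Scope ring_scope.
Local Open Scope classical_set_scope.

Definition reclusive (R : realType) (d : nat) (A : 'M[R]_d) : Prop :=
  [/\ (forall i j : 'I_d, (j < i)%N -> A i j = 0),
      (forall i : 'I_d, A i i = 1) &
      (forall i j k : 'I_d, (i <= j)%N -> (j < k)%N -> A i k < A i j /\ 0 < A i k)].

Definition reclusive_tile (R : realType) (d : nat) (A : 'M[R]_d) (v : 'cV[int]_d)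
  : set 'cV[R]_d :=
  [set x | exists u : 'cV[R]_d, (forall i, 0 <= u i ord0 < 1) /\
           x = A *m map_mx (fun z : int => z%:~R) v + u].

Definition reclusive_partition (R : realType) (d : nat) (A : 'M[R]_d)
  : set (set 'cV[R]_d) :=
  [set X | exists v : 'cV[int]_d, X = reclusive_tile A v].

Definition partition_adjacent (R : realType) (d : nat) (X Y : set 'cV[R]_d) : Prop :=
  closure X `&` closure Y !=set0.

(* Main.v *)
Require Import Defs.
From mathcomp Require Import all_boot all_order all_algebra.
From mathcomp Require Import all_classical all_reals all_analysis.
From mathcomp Require Import zify ring lra.
Import Order.TTheory GRing.Theory Num.Theory numFieldNormedType.Exports.
Set Implicit Arguments. Unset Strict Implicit. Unset Printing Implicit Defensive.
Local Open Scope ring_scope.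

Lemma sum_split (V : nmodType) (d : nat) (F : 'I_d -> V) (jo : 'I_d) :
  \sum_(k < d | (jo <= k)%N) F k = F jo + \sum_(k < d | (jo.+1 <= k)%N) F k.
Proof.
rewrite (bigD1 jo) //=; congr (_ + _); apply: eq_bigl => k.
by rewrite (ltn_neqAle jo k) andbC eq_sym.
Qed.

Lemma int_test (R : realType) (x : int) (t : R) : `|x%:~R + t| <= 1 -> -1 < t -> t < 1 -> -1 <= x <= 1.
Proof.
move=> h1 h2 h3.
have := ler_norml (x%:~R + t) 1; rewrite h1 => /esym/andP[h6 h7].
have h4 : -2 < x.
  rewrite -(ltr_int R) intrN /=; lra.
have h5 : x < 2.
  rewrite -(ltr_int R) /=; lra.
lia.
Qed.

Definition tsum (R : realType) d (A : 'M[R]_d) (w : 'I_d -> int) (i : 'I_d) (j : nat) : R :=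
  \sum_(k < d | (j <= k)%N) A i k * (w k)%:~R.
Definition ssum d (w : 'I_d -> int) (j : nat) : int :=
  \sum_(k < d | (j <= k)%N) (k.+1)%:Z * w k.

Definition Inv (R : realType) d (A : 'M[R]_d) (w : 'I_d -> int) (j : nat) : Prop :=
 (forall k : 'I_d, (j <= k)%N -> w k = 0) \/
 exists (m : 'I_d) (s : int), [/\ (j <= m)%N, (s = 1 \/ s = -1),
   (forall i : 'I_d, (i < m)%N -> 0 < s%:~R * tsum A w i j /\ s%:~R * tsum A w i j <= A i m) &
   (((m.+1)%:Z <= s * ssum w j <= d%:Z) \/ ((m.+1)%:Z - d%:Z <= s * ssum w j <= -1))].

Lemma row_sum (R : realType) d (A : 'M[R]_d) (w : 'I_d -> int) (jo : 'I_d) :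
  reclusive A ->
  \sum_k A jo k * (w k)%:~R = (w jo)%:~R + tsum A w jo jo.+1.
Proof.
case=> h0 h1 h2.
rewrite /tsum -[(w jo)%:~R]mul1r -(h1 jo) -sum_split (bigID (fun k : 'I_d => (jo <= k)%N)) /=.
rewrite [X in _ + X]big1 ?addr0 // => k; rewrite -ltnNge => hk.
by rewrite h0 // mul0r.
Qed.

Lemma inv_all (R : realType) d (A : 'M[R]_d) (w : 'I_d -> int) :
  reclusive A -> (forall i, `|\sum_k A i k * (w k)%:~R| <= 1) ->
  forall n, (n <= d)%N -> Inv A w (d - n).
Proof.
move=> hA hrow; elim=> [|n IH] hn.
  left=> k; rewrite subn0 => hk; have := ltn_ord k; lia.
have IH' := IH (ltnW hn).
have hj : (d - n.+1 < d)%N by lia.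
pose jo := Ordinal hj.
have -> : (d - n.+1)%N = jo by [].
have e : (d - n)%N = jo.+1 by rewrite /=; lia.
rewrite e in IH'.
have hr := hrow jo; rewrite row_sum // in hr.
case: hA => hA0 hA1 hA2.
have tS : forall i, tsum A w i jo = A i jo * (w jo)%:~R + tsum A w i jo.+1.
  by move=> i; rewrite /tsum sum_split.
have sS : ssum w jo = (jo.+1)%:Z * w jo + ssum w jo.+1.
  by rewrite /ssum sum_split.
case: IH' => [hz | [m [s [hm hs ht hS]]]].
- have t0 : forall i, tsum A w i jo.+1 = 0.
    by move=> i; rewrite /tsum big1 // => k hk; rewrite hz // mulr0.
  have s0 : ssum w jo.+1 = 0.
    by rewrite /ssum big1 // => k hk; rewrite hz // mulr0.
  rewrite t0 in hr.
  have := int_test hr; rewrite ?ltrN10 ?ltr01 => /(_ isT isT) hw.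
  have [hw0|hw0] := eqVneq (w jo) 0.
    left=> k; rewrite leq_eqVlt => /orP[/eqP hk|hk]; last exact: hz.
    by have -> : k = jo by apply: val_inj.
  right; exists jo, (w jo); split => //.
  + lia.
  + move=> i hi; rewrite tS t0 addr0.
    have [_ ?] := hA2 i i jo (leqnn _) hi.
    have [->|->] : w jo = 1 \/ w jo = -1 by lia.
      by rewrite /= mul1r mulr1; lra.
    by rewrite /= intrN mulN1r mulrN1 opprK; lra.
  + rewrite sS s0 addr0; left; have := ltn_ord jo.
    have [->|->] : w jo = 1 \/ w jo = -1 by lia.
      lia. lia.
- have jm : (jo < m)%N by [].
  have [t1 t2] := ht jo jm.
  have [lt1 _] := hA2 jo jo m (leqnn _) jm; rewrite hA1 in lt1.
  have hw : w jo = 0 \/ w jo = - s.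
    case: hs => hs; subst s.
      have := int_test hr; move: t1 t2; rewrite /= mul1r => t1 t2.
      move=> /(_ ltac:(lra) ltac:(lra)) ?.
      have : w jo < 1; last lia.
      rewrite -(ltr_int R) /=.
      have := ler_norml ((w jo)%:~R + tsum A w jo jo.+1) 1; rewrite hr.
      move=> /esym/andP[h6 h7]; lra.
    have := int_test hr; move: t1 t2; rewrite /= intrN mulN1r => t1 t2.
    move=> /(_ ltac:(lra) ltac:(lra)) ?.
    have : -1 < w jo; last lia.
    rewrite -(ltr_int R) intrN /=.
    have := ler_norml ((w jo)%:~R + tsum A w jo jo.+1) 1; rewrite hr.
    move=> /esym/andP[h6 h7]; lra.
  case: hw => hw.
  + right; exists m, s; split => //.
    * by apply: ltnW.
    * by move=> i hi; rewrite tS hw mulr0 add0r; apply: ht.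
    * by rewrite sS hw mulr0 add0r.
  + right; exists jo, (- s); split => //.
    * by case: hs => ->; [right|left].
    * move=> i hi.
      have him : (i < m)%N by apply: ltn_trans hi jm.
      have [u1 u2] := ht i him.
      have [v1 v2] := hA2 i jo m (ltnW hi) jm.
      rewrite tS hw.
      case: hs => hs; subst s; move: u1 u2; rewrite /= ?intrN ?opprK ?mulN1r ?mul1r ?mulrN1 ?mulr1 => u1 u2; split; lra.
    * rewrite sS hw.
      have := ltn_ord jo.
      case: hs => hs; subst s; lia.
Qed.

Lemma key (R : realType) d (A : 'M[R]_d) (w : 'I_d -> int) :
  reclusive A -> (forall i, `|\sum_k A i k * (w k)%:~R| <= 1) ->
  (exists k, w k != 0) -> forall q : int,
  \sum_(k < d) (k.+1)%:Z * w k != q * (d.+1)%:Z.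
Proof.
move=> hA hrow [k0 hk0] q.
have := inv_all hA hrow (leqnn d); rewrite subnn.
have -> : \sum_(k < d) (k.+1)%:Z * w k = ssum w 0 by rewrite /ssum; apply: eq_bigl.
case=> [hz | [m [s [_ hs _ hS]]]].
  by move: hk0; rewrite hz.
apply/eqP => e; rewrite e in hS.
have := ltn_ord m.
case: hs => hs; subst s; move: hS; rewrite ?mul1r ?mulN1r => -[/andP[h1 h2]|/andP[h1 h2]]; move=> hm; clear -h1 h2 hm.
all: (have [hq|hq] := lerP q (-1); [nia|idtac]).
all: (have [hq2|hq2] := lerP q 0; [lia|nia]).
Qed.

Lemma closure_le (R : realType) d (X : set 'cV[R]_d) (i : 'I_d) (b : R) :
  (forall x, X x -> x i ord0 <= b) -> forall x, closure X x -> x i ord0 <= b.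
Proof.
move=> h x hx.
have hc : closed ((fun M : 'cV[R]_d => M i ord0) @^-1` [set r | r <= b]).
  have hcont : continuous (fun M : 'cV[R]_d => M i ord0) by exact: coord_continuous.
  have hcl : closed [set r : R | r <= b] by exact: closed_le.
  exact: ((continuous_closedP _).1 hcont _ hcl).
have := (closure_id _).1 hc => E.
have := closure_subset h hx; rewrite -E; done.
Qed.

Lemma closure_ge (R : realType) d (X : set 'cV[R]_d) (i : 'I_d) (b : R) :
  (forall x, X x -> b <= x i ord0) -> forall x, closure X x -> b <= x i ord0.
Proof.
move=> h x hx.
have hc : closed ((fun M : 'cV[R]_d => M i ord0) @^-1` [set r | b <= r]).
  have hcont : continuous (fun M : 'cV[R]_d => M i ord0) by exact: coord_continuous.
  have hcl : closed [set r : R | b <= r] by exact: closed_ge.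
  exact: ((continuous_closedP _).1 hcont _ hcl).
have := (closure_id _).1 hc => E.
have := closure_subset h hx; rewrite -E; done.
Qed.

Definition tv (R : realType) d (A : 'M[R]_d) (v : 'cV[int]_d) (i : 'I_d) : R :=
  \sum_k A i k * (v k ord0)%:~R.

Lemma closure_tile (R : realType) d (A : 'M[R]_d) (v : 'cV[int]_d) x i :
  closure (reclusive_tile A v) x -> tv A v i <= x i ord0 <= tv A v i + 1.
Proof.
move=> hx; apply/andP; split.
  apply: (closure_ge _ hx) => y [u [hu ->]].
  rewrite mxE mxE /tv.
  have := hu i => /andP[u1 u2].
  have -> : (\sum_j A i j * map_mx (fun z : int => z%:~R) v j ord0) = \sum_k A i k * (v k ord0)%:~R.
    by apply: eq_bigr => k _; rewrite mxE.
  lra.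
apply: (closure_le _ hx) => y [u [hu ->]].
rewrite mxE mxE /tv.
have := hu i => /andP[u1 u2].
have -> : (\sum_j A i j * map_mx (fun z : int => z%:~R) v j ord0) = \sum_k A i k * (v k ord0)%:~R.
  by apply: eq_bigr => k _; rewrite mxE.
lra.
Qed.

Definition fval d (v : 'cV[int]_d) : int := \sum_(k < d) (k.+1)%:Z * v k ord0.

Definition pickv (R : realType) d (A : 'M[R]_d) (X : set 'cV[R]_d) : 'cV[int]_d :=
  match pselect (exists v, X = reclusive_tile A v) with
  | left h => projT1 (cid h)
  | right _ => 0
  end.

Lemma pickvP (R : realType) d (A : 'M[R]_d) X :
  reclusive_partition A X -> X = reclusive_tile A (pickv A X).
Proof.
move=> h; rewrite /pickv; case: pselect => [h'|//].
exact: (projT2 (cid h')).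
Qed.

Theorem mainTheorem11 (R : realType) (d : nat) (A : 'M[R]_d) :
  reclusive A ->
  exists c : set 'cV[R]_d -> 'I_d.+1,
    forall X Y : set 'cV[R]_d,
      reclusive_partition A X -> reclusive_partition A Y ->
      X <> Y -> partition_adjacent X Y -> c X <> c Y.
Proof.
move=> hA.
exists (fun X => inord (absz (fval (pickv A X) %% (d.+1)%:Z)%Z)).
move=> X Y hX hY hXY [p [hpX hpY]] hc.
set v := pickv A X in hc; set v' := pickv A Y in hc.
have eX := pickvP hX; have eY := pickvP hY.
have hpX' : closure (reclusive_tile A v) p by rewrite /v -eX.
have hpY' : closure (reclusive_tile A v') p by rewrite /v' -eY.
have hvv : v <> v' by move=> e; apply: hXY; rewrite eX eY -/v -/v' e.
have [k0 hk0] : exists k, v k ord0 - v' k ord0 != 0.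
  case: (pselect (exists k, v k ord0 - v' k ord0 != 0)) => [//|hn].
  exfalso; apply: hvv; apply/matrixP => i j; rewrite (ord1 j); apply/eqP.
  rewrite -subr_eq0; apply/negPn/negP => h; apply: hn; by exists i.
have hrow : forall i, `|\sum_k A i k * ((v k ord0 - v' k ord0)%:~R)| <= 1.
  move=> i.
  have h1 := closure_tile i hpX'.
  have h2 := closure_tile i hpY'.
  have -> : \sum_k A i k * ((v k ord0 - v' k ord0)%:~R) = tv A v i - tv A v' i.
    by rewrite /tv -sumrB; apply: eq_bigr => k _; rewrite intrB mulrBr.
  move: h1 h2 => /andP[a1 a2] /andP[b1 b2].
  rewrite ler_norml; apply/andP; split; lra.
have n0 : (d.+1)%:Z != 0 by [].
have m1 := modz_ge0 (fval v) n0; have m2 := modz_ge0 (fval v') n0.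
have l1 := ltz_pmod (fval v) (isT : (0 < (d.+1)%:Z)).
have l2 := ltz_pmod (fval v') (isT : (0 < (d.+1)%:Z)).
have e1 : absz (fval v %% (d.+1)%:Z)%Z = absz (fval v' %% (d.+1)%:Z)%Z.
  have hc' := congr1 (@nat_of_ord _) hc; move: hc'.
  have hlt1 : (absz (fval v %% (d.+1)%:Z)%Z < d.+1)%N by rewrite -ltz_nat gez0_abs.
  have hlt2 : (absz (fval v' %% (d.+1)%:Z)%Z < d.+1)%N by rewrite -ltz_nat gez0_abs.
  by rewrite /= !inordK.
have e2 : (fval v %% (d.+1)%:Z)%Z = (fval v' %% (d.+1)%:Z)%Z.
  by rewrite -(gez0_abs m1) -(gez0_abs m2) e1.
have := key hA hrow (ex_intro _ k0 hk0) ((fval v %/ (d.+1)%:Z)%Z - (fval v' %/ (d.+1)%:Z)%Z).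
apply/negP; rewrite negbK; apply/eqP.
have -> : \sum_(k < d) (k.+1)%:Z * (v k ord0 - v' k ord0) = fval v - fval v'.
  by rewrite /fval -sumrB; apply: eq_bigr => k _; rewrite mulrBr.
rewrite {1}(divz_eq (fval v) (d.+1)%:Z) {1}(divz_eq (fval v') (d.+1)%:Z) e2.
ring.
Qed.
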